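(* Let $f\in\mathbb{Q}[x]$ be such that $f=f_1\cdots f_u$ for distinct irreducible $f_1,\dots,f_u\in\mathbb{Q}[x]$. For each $i$, let $m_i\in\mathbb{N}$ be minimal such that $f_i\mid(x^{m_i}-r_i)$ for some $r_i\in\mathbb{Q}$, and suppose $f\mid(x^m-r)$ for some positive integer $m$ and $r\in\mathbb{Q}$. Then $\operatorname{lcm}(m_1,\dots,m_u)\mid m$. *)

(* Defs.v *)
From mathcomp Require Import all_boot all_order all_algebra.
Set Implicit Arguments. Unset Strict Implicit. Unset Printing Implicit Defensive.
Import GRing.Theory.
Local Open Scope ring_scope.

Definition divides_binomial (g : {poly rat}) (k : nat) : Prop :=
  exists r : rat, g %| 'X^k - r%:P.

Definition minimal_binomial_exponent (g : {poly rat}) (k : nat) : Prop :=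
  (0 < k)%N /\ divides_binomial g k /\
  forall k' : nat, (0 < k')%N -> divides_binomial g k' -> (k <= k')%N.

(* Main.v *)
Require Import Defs.
From mathcomp Require Import all_boot all_order all_algebra.
From mathcomp Require Import ring.
Local Open Scope ring_scope.
Import GRing.Theory.

Lemma key (g : {poly rat}) k m r : irreducible_poly g ->
  minimal_binomial_exponent g k -> (0 < m)%N -> g %| 'X^m - r%:P -> (k %| m)%N.
Proof.
move=> irr [k0 [[a ha] kmin]] m0 hg.
have [gX|ngX] := boolP (g %| 'X).
  have k1 : (k <= 1)%N by apply: kmin => //; exists 0; rewrite subr0 expr1.
  have -> : k = 1%N by apply/eqP; rewrite eqn_leq k1 k0.
  by rewrite dvd1n.
have cop : coprimep g 'X.
  have [h|h] := irredp_XsubCP irr (dvdp_gcdl g 'X).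
    by rewrite coprimep_def (eqp_size h) size_poly1.
  by rewrite -(eqp_dvdl _ h) dvdp_gcdr in ngX.
have a0 : a != 0.
  apply/negP => /eqP a0; move: ha; rewrite a0 subr0 => ha.
  have := coprimep_expr k cop => ck.
  move: ha; rewrite -[X in _ %| X]mul1r (Gauss_dvdpl _ ck) dvdp1 => /eqP s1.
  by case: irr; rewrite s1.
set q := (m %/ k)%N; set s := (m %% k)%N.
have hq : g %| 'X^s * ('X^(q * k) - (a ^+ q)%:P).
  apply: dvdp_mull; rewrite mulnC exprM rmorphXn subrXX.
  exact: dvdp_mulr.
have hs : g %| 'X^s * (a ^+ q)%:P - r%:P.
  have -> : 'X^s * (a ^+ q)%:P - r%:P =
     ('X^m - r%:P) - 'X^s * ('X^(q * k) - (a ^+ q)%:P).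
    rewrite mulrBr -exprD addnC -divn_eq; ring.
  exact: dvdp_sub.
have aq0 : a ^+ q != 0 by rewrite expf_neq0.
have hs' : g %| 'X^s - (r / a ^+ q)%:P.
  rewrite -(dvdpZr _ _ aq0).
  have -> : a ^+ q *: ('X^s - (r / a ^+ q)%:P) = 'X^s * (a ^+ q)%:P - r%:P.
    rewrite scalerBr -!mul_polyC -polyCM mulrC (mulrC (a ^+ q)) divfK //.
  exact: hs.
case: (posnP s) => [s0|spos]; first by rewrite /dvdn -/s s0.
have : (k <= s)%N by apply: kmin => //; exists (r / a ^+ q).
by rewrite leqNgt ltn_pmod.
Qed.

Theorem lemma3p4 (u : nat) (fs : 'I_u -> {poly rat}) (ms : 'I_u -> nat)
  (f : {poly rat}) (m : nat) (r : rat)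
  (hinj : injective fs)
  (hirr : forall i, irreducible_poly (fs i))
  (hf : f = \prod_(i < u) fs i)
  (hms : forall i, minimal_binomial_exponent (fs i) (ms i))
  (hm : (0 < m)%N)
  (hdiv : f %| 'X^m - r%:P) :
  (\big[lcmn/1%N]_(i < u) ms i %| m)%N.
Proof.
apply: (big_ind (fun d => d %| m)%N) => //.
  by move=> x y hx hy; rewrite dvdn_lcm hx hy.
move=> i _ /=; apply: (@key (fs i) (ms i) m r (hirr i) (hms i) hm).
apply: dvdp_trans hdiv; rewrite hf.
by rewrite (bigD1 i) //= dvdp_mulIl.
Qed.
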